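(* Let $S$ be a restriction monoid generated, as an algebra of type $(2,1,1,0)$, by a set $A$; let $T=A^*$, $E=P(S)$, and for $v\in T$ let $\overline{v}$ be the value of $v$ in $S$. For $v\in T$ and $e\in E$ let $v\cdot e$ be defined iff $\overline{v}^*\ge e$, and then $v\cdot e=(\overline{v}e)^+$. Then: (1) $\cdot$ is a partially defined action of $T$ on $E$ (satisfying axioms (A), (B), (C)), and the monoid $M(T,E)$ is ultra $F$-restriction (and ample); (2) the map $M(T,E)\to S$, $(e,v)\mapsto e\overline{v}$, is a surjective projection separating homomorphism of $(2,1,1,0)$-algebras.
   Context: Restriction semigroup: algebra $(S,\cdot,{}^*,{}^+)$ with $(S,\cdot)$ a semigroup satisfying $xx^*=x$, $x^*y^*=y^*x^*$, $(xy^* )^*=x^*y^*$, $x^*y=y(xy)^*$, $x^+x=x$, $x^+y^+=y^+x^+$, $(x^+y)^+=x^+y^+$, $xy^+=(xy)^+x$, $(x^+)^*=x^+$, $(x^* )^+=x^*$; a restriction monoid has an identity $1$ (type $(2,1,1,0)$). $P(S)=\{x^*\}$ is the semilattice of projections; $\sigma$ is the least congruence identifying projections; $S$ is proper if ($a^*=b^*$, $a\sigma b$) or ($a^+=b^+$, $a\sigma b$) imply $a=b$; $F$-restriction if each $\sigma$-class has a maximum in the order $a\le b\iff a=eb$ ($e\in P(S)$); ample if $ac=bc\Rightarrow ac^+=bc^+$ and $ca=cb\Rightarrow c^*a=c^*b$. A homomorphism is projection separating if it is injective on projections. Left partial action of monoid $T$ on semilattice $Y$: $1\cdot y=y$; if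 $t\cdot y$, $s\cdot(t\cdot y)$ defined then $(st)\cdot y$ defined and equal. Axioms with $\varphi_t\colon y\mapsto t\cdot y$: (A) $\mathrm{dom}\varphi_t,\mathrm{ran}\varphi_t$ order ideals; (B) $\varphi_t$ an order-isomorphism between them; (C) $\mathrm{dom}\varphi_t\ne\varnothing$. Partially defined action: $(st)\cdot x$ defined iff $t\cdot x$ and $s\cdot(t\cdot x)$ defined. Reverse: $y\circ t=\varphi_t^{-1}(y)$ for $y\in\mathrm{ran}\varphi_t$. $M(T,Y)=\{(y,t)\colon y\circ t\text{ defined}\}$, $(x,s)(y,t)=(s\cdot((x\circ s)\wedge y),st)$, $(y,t)^*=(y\circ t,1)$, $(y,t)^+=(y,1)$. Underlying left partial action of a proper restriction semigroup $S$: $t\cdot e$ ($t\in S/\sigma$) defined iff some $a\in t$ has $a^*\ge e$, value $(ae)^+$. Ultra $F$-restriction: proper, $F$-restriction, and the underlying left partial action is a partially defined action. *)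

(* Defs.v *)
From Stdlib Require Import List ClassicalEpsilon.

Record ralg : Type := RAlg {
  car :> Type;
  rmul : car -> car -> car;
  rstar : car -> car;
  rplus : car -> car;
  rone : car }.

Arguments rmul {_}. Arguments rstar {_}. Arguments rplus {_}. Arguments rone {_}.

Record is_restriction_monoid (S : ralg) : Prop := {
  rm_assoc : forall x y z : S, rmul x (rmul y z) = rmul (rmul x y) z;
  rm_onel : forall x : S, rmul rone x = x;
  rm_oner : forall x : S, rmul x rone = x;
  rm_1 : forall x : S, rmul x (rstar x) = x;
  rm_2 : forall x y : S, rmul (rstar x) (rstar y) = rmul (rstar y) (rstar x);
  rm_3 : forall x y : S, rstar (rmul x (rstar y)) = rmul (rstar x) (rstar y);
  rm_4 : forall x y : S, rmul (rstar x) y = rmul y (rstar (rmul x y));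
  rm_5 : forall x : S, rmul (rplus x) x = x;
  rm_6 : forall x y : S, rmul (rplus x) (rplus y) = rmul (rplus y) (rplus x);
  rm_7 : forall x y : S, rplus (rmul (rplus x) y) = rmul (rplus x) (rplus y);
  rm_8 : forall x y : S, rmul x (rplus y) = rmul (rplus (rmul x y)) x;
  rm_9 : forall x : S, rstar (rplus x) = rplus x;
  rm_10 : forall x : S, rplus (rstar x) = rstar x }.

Inductive generated (S : ralg) {A : Type} (g : A -> S) : S -> Prop :=
  | gen_base : forall a, generated S g (g a)
  | gen_one : generated S g rone
  | gen_mul : forall x y, generated S g x -> generated S g y -> generated S g (rmul x y)
  | gen_star : forall x, generated S g x -> generated S g (rstar x)
  | gen_plus : forall x, generated S g x -> generated S g (rplus x).

Definition isProj (S : ralg) (x : S) : Prop := exists y : S, x = rstar y.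
Definition natle (S : ralg) (a b : S) : Prop := exists e : S, isProj S e /\ a = rmul e b.
Definition Proj (S : ralg) : Type := { e : S | isProj S e }.
Definition leP (S : ralg) (e f : Proj S) : Prop := natle S (proj1_sig e) (proj1_sig f).

Definition is_congruence (S : ralg) (th : S -> S -> Prop) : Prop :=
  (forall a, th a a) /\ (forall a b, th a b -> th b a) /\
  (forall a b c, th a b -> th b c -> th a c) /\
  (forall a b c : S, th a b -> th (rmul c a) (rmul c b) /\ th (rmul a c) (rmul b c)) /\
  (forall a b : S, th a b -> th (rstar a) (rstar b) /\ th (rplus a) (rplus b)).

Definition sigma (S : ralg) (a b : S) : Prop :=
  forall th, is_congruence S th ->
    (forall e f, isProj S e -> isProj S f -> th e f) -> th a b.

Definition proper (S : ralg) : Prop :=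
  forall a b : S, sigma S a b ->
    (rstar a = rstar b -> a = b) /\ (rplus a = rplus b -> a = b).

Definition F_restriction (S : ralg) : Prop :=
  forall a : S, exists m : S, sigma S a m /\ (forall b, sigma S a b -> natle S b m).

Definition ample (S : ralg) : Prop :=
  (forall a b c : S, rmul a c = rmul b c -> rmul a (rplus c) = rmul b (rplus c)) /\
  (forall a b c : S, rmul c a = rmul c b -> rmul (rstar c) a = rmul (rstar c) b).

Definition pdom {T Y : Type} (R : T -> Y -> Y -> Prop) (t : T) (y : Y) : Prop :=
  exists z, R t y z.
Definition pran {T Y : Type} (R : T -> Y -> Y -> Prop) (t : T) (z : Y) : Prop :=
  exists y, R t y z.

(* R t y z  means  "t . y is defined and equals z" *)
Record is_left_partial_action {T Y : Type} (op : T -> T -> T) (u : T)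
    (R : T -> Y -> Y -> Prop) : Prop := {
  lpa_fun : forall t y z1 z2, R t y z1 -> R t y z2 -> z1 = z2;
  lpa_unit : forall y, R u y y;
  lpa_comp : forall s t y z w, R t y z -> R s z w -> R (op s t) y w }.

Definition is_partially_defined_action {T Y : Type} (op : T -> T -> T) (u : T)
    (R : T -> Y -> Y -> Prop) : Prop :=
  is_left_partial_action op u R /\
  (forall s t y, pdom R (op s t) y <-> (exists z, R t y z /\ pdom R s z)).

Definition order_ideal {Y : Type} (le : Y -> Y -> Prop) (D : Y -> Prop) : Prop :=
  forall y z, D y -> le z y -> D z.

Definition axiomA {T Y : Type} (le : Y -> Y -> Prop) (R : T -> Y -> Y -> Prop) : Prop :=
  forall t, order_ideal le (pdom R t) /\ order_ideal le (pran R t).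

(* phi_t is an order isomorphism dom phi_t -> ran phi_t
   (it is onto ran phi_t by definition of ran) *)
Definition axiomB {T Y : Type} (le : Y -> Y -> Prop) (R : T -> Y -> Y -> Prop) : Prop :=
  forall t y1 y2 z1 z2, R t y1 z1 -> R t y2 z2 ->
    (z1 = z2 -> y1 = y2) /\ (le y1 y2 <-> le z1 z2).

Definition axiomC {T Y : Type} (R : T -> Y -> Y -> Prop) : Prop :=
  forall t, exists y, pdom R t y.

Definition SigmaClass (S : ralg) : Type := { C : S -> Prop | exists a, C = sigma S a }.
Definition classOf (S : ralg) (a : S) : SigmaClass S :=
  exist _ (sigma S a) (ex_intro _ a eq_refl).
Definition rep (S : ralg) (C : SigmaClass S) : S :=
  proj1_sig (constructive_indefinite_description _ (proj2_sig C)).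
Definition classMul (S : ralg) (C D : SigmaClass S) : SigmaClass S :=
  classOf S (rmul (rep S C) (rep S D)).
Definition classOne (S : ralg) : SigmaClass S := classOf S rone.

Definition underlying_action (S : ralg) (t : SigmaClass S) (e f : Proj S) : Prop :=
  exists a : S, proj1_sig t a /\ natle S (proj1_sig e) (rstar a) /\
    proj1_sig f = rplus (rmul a (proj1_sig e)).

Definition ultra_F_restriction (S : ralg) : Prop :=
  proper S /\ F_restriction S /\
  is_partially_defined_action (classMul S) (classOne S) (underlying_action S).

Section MTY.
Context {T Y : Type} (op : T -> T -> T) (u : T) (meet : Y -> Y -> Y) (top : Y)
        (R : T -> Y -> Y -> Prop).

(* y o t  (the reverse action), defined for y in ran phi_t *)
Definition Mrev (t : T) (x : Y) : Y := epsilon (inhabits x) (fun y => R t y x).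
(* t . y, defined for y in dom phi_t *)
Definition Mact (t : T) (y : Y) : Y := epsilon (inhabits y) (fun z => R t y z).

Definition inM (p : Y * T) : Prop := pran R (snd p) (fst p).

Definition Mraw_mul (p q : Y * T) : Y * T :=
  (Mact (snd p) (meet (Mrev (snd p) (fst p)) (fst q)), op (snd p) (snd q)).
Definition Mraw_star (p : Y * T) : Y * T := (Mrev (snd p) (fst p), u).
Definition Mraw_plus (p : Y * T) : Y * T := (fst p, u).
Definition Mraw_one : Y * T := (top, u).

Definition M_closed : Prop :=
  inM Mraw_one /\
  (forall p q, inM p -> inM q -> inM (Mraw_mul p q)) /\
  (forall p, inM p -> inM (Mraw_star p) /\ inM (Mraw_plus p)).

Definition Mcar : Type := { p : Y * T | inM p }.

(* the fallbacks below are never used once M_closed holds *)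
Definition Mmul (p q : Mcar) : Mcar :=
  match excluded_middle_informative (inM (Mraw_mul (proj1_sig p) (proj1_sig q))) with
  | left h => exist _ _ h | right _ => p end.
Definition Mstar (p : Mcar) : Mcar :=
  match excluded_middle_informative (inM (Mraw_star (proj1_sig p))) with
  | left h => exist _ _ h | right _ => p end.
Definition Mplus (p : Mcar) : Mcar :=
  match excluded_middle_informative (inM (Mraw_plus (proj1_sig p))) with
  | left h => exist _ _ h | right _ => p end.

Definition Malg (H1 : inM Mraw_one) : ralg :=
  RAlg Mcar Mmul Mstar Mplus (exist _ _ H1).
End MTY.

Definition wval (S : ralg) {A : Type} (g : A -> S) (v : list A) : S :=
  fold_right (fun a acc => rmul (g a) acc) rone v.

(* product of projections (meet in E = P(S)); fallback never used in a restriction monoid *)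
Definition projMul (S : ralg) (e f : Proj S) : Proj S :=
  match excluded_middle_informative (isProj S (rmul (proj1_sig e) (proj1_sig f))) with
  | left h => exist _ _ h | right _ => e end.

(* identity 1 of S as a projection (top of E); fallback never used *)
Definition projOne (S : ralg) : Proj S :=
  match excluded_middle_informative (isProj S rone) with
  | left h => exist _ _ h | right _ => exist _ (rstar rone) (ex_intro _ rone eq_refl) end.

Definition word_action (S : ralg) {A : Type} (g : A -> S) (v : list A) (e f : Proj S) : Prop :=
  natle S (proj1_sig e) (rstar (wval S g v)) /\
  proj1_sig f = rplus (rmul (wval S g v) (proj1_sig e)).

Definition is_hom (S1 S2 : ralg) (h : S1 -> S2) : Prop :=
  (forall x y, h (rmul x y) = rmul (h x) (h y)) /\
  (forall x, h (rstar x) = rstar (h x)) /\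
  (forall x, h (rplus x) = rplus (h x)) /\
  h rone = rone.

Definition projection_separating (S1 S2 : ralg) (h : S1 -> S2) : Prop :=
  forall x y : S1, isProj S1 x -> isProj S1 y -> h x = h y -> x = y.

Definition surjective {X Z : Type} (h : X -> Z) : Prop := forall z, exists x, h x = z.

(* Main.v *)
Require Import Defs.
From Stdlib Require Import List ClassicalEpsilon ProofIrrelevance.

Section Alg.
Variable S : ralg.
Variable HS : is_restriction_monoid S.

Local Notation "x ⋅ y" := (@rmul S x y) (at level 40, left associativity).
Local Notation st := (@rstar S).
Local Notation pl := (@rplus S).
Local Notation one := (@rone S).

Definition PP (e : S) := st e = e.

Lemma assoc x y z : x ⋅ (y ⋅ z) = x ⋅ y ⋅ z. Proof. apply (rm_assoc _ HS). Qed.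
Lemma onel x : one ⋅ x = x. Proof. apply (rm_onel _ HS). Qed.
Lemma oner x : x ⋅ one = x. Proof. apply (rm_oner _ HS). Qed.
Lemma ss x : st (st x) = st x.
Proof. rewrite <- (rm_10 _ HS x) at 1. rewrite (rm_9 _ HS). apply (rm_10 _ HS). Qed.
Lemma pp x : pl (pl x) = pl x.
Proof. rewrite <- (rm_9 _ HS x) at 1. rewrite (rm_10 _ HS). apply (rm_9 _ HS). Qed.
Lemma PP_st x : PP (st x). Proof. apply ss. Qed.
Lemma PP_pl x : PP (pl x). Proof. apply (rm_9 _ HS). Qed.
Lemma PP_plus e : PP e -> pl e = e.
Proof. unfold PP; intro h. rewrite <- h. apply (rm_10 _ HS). Qed.
Lemma PP_idem e : PP e -> e ⋅ e = e.
Proof. unfold PP; intro h. rewrite <- h at 2. apply (rm_1 _ HS). Qed.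
Lemma PP_comm e f : PP e -> PP f -> e ⋅ f = f ⋅ e.
Proof. unfold PP; intros h1 h2. rewrite <- h1, <- h2. apply (rm_2 _ HS). Qed.
Lemma PP_mul e f : PP e -> PP f -> PP (e ⋅ f).
Proof. unfold PP; intros h1 h2. rewrite <- h2 at 1. rewrite (rm_3 _ HS), h1, h2. reflexivity. Qed.
Lemma isProj_PP e : isProj S e <-> PP e.
Proof. split. intros [y ->]. apply PP_st. intro h. exists e. symmetry; exact h. Qed.
Lemma PP_one : PP one.
Proof. unfold PP. rewrite <- (rm_onel _ HS (st one)). apply (rm_1 _ HS). Qed.
Lemma pl_one : pl one = one. Proof. apply PP_plus, PP_one. Qed.

Lemma star_le x y : st (x ⋅ y) ⋅ st y = st (x ⋅ y).
Proof. rewrite <- (rm_3 _ HS). rewrite <- assoc, (rm_1 _ HS). reflexivity. Qed.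
Lemma plus_le x y : pl x ⋅ pl (x ⋅ y) = pl (x ⋅ y).
Proof. rewrite <- (rm_7 _ HS). rewrite assoc, (rm_5 _ HS). reflexivity. Qed.
Lemma star_xy x y : st (x ⋅ y) = st (st x ⋅ y).
Proof. rewrite (rm_4 _ HS). rewrite (rm_3 _ HS), (rm_2 _ HS). symmetry. apply star_le. Qed.
Lemma plus_xy x y : pl (x ⋅ y) = pl (x ⋅ pl y).
Proof. rewrite (rm_8 _ HS), (rm_7 _ HS), (rm_6 _ HS). symmetry. apply plus_le. Qed.

Lemma mov_l e w : PP e -> e ⋅ w = w ⋅ st (e ⋅ w).
Proof. intro h; unfold PP in h. rewrite <- h at 1. rewrite (rm_4 _ HS). reflexivity. Qed.
Lemma mov_r e w : PP e -> w ⋅ e = pl (w ⋅ e) ⋅ w.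
Proof. intro h. rewrite <- (PP_plus e h) at 1. apply (rm_8 _ HS). Qed.
Lemma star_we e w : PP e -> st (w ⋅ e) = st w ⋅ e.
Proof. intro h; unfold PP in h. rewrite <- h at 1. rewrite (rm_3 _ HS), h. reflexivity. Qed.
Lemma plus_ew e w : PP e -> pl (e ⋅ w) = e ⋅ pl w.
Proof. intro h. rewrite <- (PP_plus e h) at 1. rewrite (rm_7 _ HS), PP_plus; auto. Qed.

Definition le (e f : S) := e ⋅ f = e.

Lemma inv1 e w : PP e -> le e (st w) -> st (pl (w ⋅ e) ⋅ w) = e.
Proof. unfold le; intros h1 h2. rewrite <- mov_r by auto. rewrite star_we by auto.
  rewrite PP_comm; auto. apply PP_st. Qed.
Lemma inv2 f w : PP f -> le f (pl w) -> pl (w ⋅ st (f ⋅ w)) = f.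
Proof. unfold le; intros h1 h2. rewrite <- mov_l by auto. rewrite plus_ew by auto. auto. Qed.
Lemma le_st_we e w : PP e -> le (st (w ⋅ e)) (st w) /\ le (st (w ⋅ e)) e.
Proof. intro h. unfold le. rewrite star_we by auto. split.
  rewrite <- assoc, (PP_comm e), assoc, PP_idem; auto using PP_st.
  rewrite <- assoc, PP_idem; auto. Qed.
Lemma le_pl_wx w x : le (pl (w ⋅ x)) (pl w).
Proof. unfold le. rewrite PP_comm by apply PP_pl. apply plus_le. Qed.
Lemma le_st_xw w x : le (st (x ⋅ w)) (st w).
Proof. unfold le. apply star_le. Qed.
Lemma le_trans e f h : le e f -> le f h -> le e h.
Proof. unfold le; intros a b. rewrite <- a, <- assoc, b. reflexivity. Qed.
Lemma le_refl e : PP e -> le e e. Proof. apply PP_idem. Qed.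
Lemma le_mul_l e f : PP e -> PP f -> le (e ⋅ f) e.
Proof. unfold le; intros. rewrite <- assoc, (PP_comm f e), assoc, PP_idem; auto. Qed.
Lemma le_mul_r e f : PP f -> le (e ⋅ f) f.
Proof. unfold le; intros. rewrite <- assoc, PP_idem; auto. Qed.
Lemma le_glb e f h : le e f -> le e h -> le e (f ⋅ h).
Proof. unfold le; intros a b. rewrite assoc, a, b. reflexivity. Qed.

Lemma natle_iff a b : PP a -> PP b -> (natle S a b <-> le a b).
Proof. intros ha hb. split.
  - intros [e [he ->]]. unfold le. rewrite <- assoc, PP_idem; auto.
  - intro h. unfold le in h. exists a. split. apply isProj_PP; auto. auto. Qed.

Variable A : Type.
Variable g : A -> S.
Local Notation R := (word_action S g).
Local Notation w := (wval S g).

Lemma wval_app s t : w (s ++ t) = w s ⋅ w t.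
Proof. induction s as [|a s IH]; simpl. symmetry; apply onel. rewrite IH, assoc. reflexivity. Qed.
Lemma wval_nil : w nil = one. Proof. reflexivity. Qed.

Definition WR (s : list A) (a b : S) := le a (st (w s)) /\ b = pl (w s ⋅ a).

Lemma WR_unit a : PP a -> WR nil a a.
Proof. intro h. split. unfold le. rewrite wval_nil, PP_one, oner. auto.
  rewrite wval_nil, onel, PP_plus; auto. Qed.

Lemma WR_comp s t a b c : PP a -> WR t a b -> WR s b c -> WR (s ++ t) a c.
Proof. intros ha [h1 h2] [h3 h4]. unfold WR. rewrite wval_app. split.
  -
    assert (E1 : st (w s) ⋅ (w t ⋅ a) = w t ⋅ a).
    { rewrite (mov_r a (w t)) by auto. rewrite <- h2, assoc.
      rewrite (PP_comm (st (w s)) b); auto using PP_st. rewrite h3; auto.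
      rewrite h2; apply PP_pl. }
    assert (E2 : st (w s ⋅ w t ⋅ a) = a).
    { rewrite <- assoc, star_xy, E1, star_we by auto. unfold le in h1.
      rewrite PP_comm; auto using PP_st. }
    unfold le. rewrite star_we in E2 by auto. rewrite PP_comm in E2; auto using PP_st.
  - rewrite h4, h2, <- plus_xy, assoc. reflexivity.
Qed.

Lemma WR_dom s t a : PP a -> le a (st (w s ⋅ w t)) ->
  WR t a (pl (w t ⋅ a)) /\ le (pl (w t ⋅ a)) (st (w s)).
Proof. intros ha h. split. split; auto.
  eapply le_trans. exact h. apply le_st_xw.
  assert (E : w t ⋅ a = st (w s) ⋅ (w t ⋅ a)).
  { unfold le in h. rewrite <- h at 1. rewrite (PP_comm a) by auto using PP_st.
    rewrite !assoc. rewrite <- (rm_4 _ HS). reflexivity. }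
  assert (E2 : pl (w t ⋅ a) = st (w s) ⋅ pl (w t ⋅ a)).
  { rewrite <- plus_ew by apply PP_st. rewrite <- E. reflexivity. }
  unfold le. rewrite PP_comm by auto using PP_st, PP_pl. symmetry; exact E2.
Qed.

Definition pj (e : Proj S) : S := proj1_sig e.
Lemma pj_PP e : PP (pj e). Proof. apply isProj_PP. apply (proj2_sig e). Qed.
Lemma projeq (e f : Proj S) : pj e = pj f -> e = f.
Proof. destruct e as [e he], f as [f hf]. unfold pj; simpl. intros ->.
  f_equal. apply proof_irrelevance. Qed.
Definition mkP (x : S) (h : PP x) : Proj S := exist _ x (proj2 (isProj_PP x) h).
Lemma pj_mkP x h : pj (mkP x h) = x. Proof. reflexivity. Qed.

Lemma R_iff v e f : R v e f <-> WR v (pj e) (pj f).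
Proof. unfold word_action, WR. rewrite natle_iff; auto using pj_PP, PP_st. reflexivity. Qed.

Lemma pdom_iff v e : pdom R v e <-> le (pj e) (st (w v)).
Proof. split. intros [z hz]. apply R_iff in hz. apply hz.
  intro h. exists (mkP _ (PP_pl (w v ⋅ pj e))). apply R_iff. split; auto. Qed.

Lemma pran_iff v e : pran R v e <-> le (pj e) (pl (w v)).
Proof. split. intros [y hy]. apply R_iff in hy. destruct hy as [_ ->]. apply le_pl_wx.
  intro h. exists (mkP _ (PP_st (pj e ⋅ w v))). apply R_iff. split. apply le_st_xw.
  simpl. rewrite inv2; auto using pj_PP. Qed.

Lemma R_inv v e f : R v e f -> pj e = st (pj f ⋅ w v).
Proof. intro h. apply R_iff in h. destruct h as [h1 h2]. rewrite h2, inv1; auto using pj_PP. Qed.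

Lemma part1 :
  (is_partially_defined_action (@app A) (@nil A) R /\
   axiomA (leP S) R /\ axiomB (leP S) R /\ axiomC R).
Proof.
  assert (LP : forall e f, leP S e f <-> le (pj e) (pj f)).
  { intros e f. unfold leP. apply natle_iff; apply pj_PP. }
  split; [split; [split|]|split; [|split]].
  - intros t y z1 z2 h1 h2. apply R_iff in h1, h2. apply projeq.
    destruct h1 as [_ ->], h2 as [_ ->]. reflexivity.
  - intro y. apply R_iff, WR_unit, pj_PP.
  - intros s t y z x h1 h2. apply R_iff in h1, h2. apply R_iff. eapply WR_comp; eauto using pj_PP.
  - intros s t y. split.
    + intro h. apply pdom_iff in h. rewrite wval_app in h.
      destruct (WR_dom s t (pj y) (pj_PP y) h) as [h1 h2].
      exists (mkP _ (PP_pl (w t ⋅ pj y))). split. apply R_iff. exact h1.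
      apply pdom_iff. exact h2.
    + intros [z [h1 [x h2]]]. exists x. apply R_iff. apply R_iff in h1, h2.
      eapply WR_comp; eauto using pj_PP.
  - intro t. split.
    + intros y z h1 h2. apply pdom_iff in h1. apply pdom_iff. apply LP in h2. eapply le_trans; eauto.
    + intros y z h1 h2. apply pran_iff in h1. apply pran_iff. apply LP in h2. eapply le_trans; eauto.
  - intros t y1 y2 z1 z2 h1 h2. split.
    + intros ->. apply projeq. rewrite (R_inv _ _ _ h1), (R_inv _ _ _ h2). reflexivity.
    + rewrite !LP. apply R_iff in h1, h2. destruct h1 as [h1 ->], h2 as [h2 ->]. split.
      * intro h. unfold le in h. rewrite <- h. rewrite (PP_comm (pj y1)) by apply pj_PP.
        rewrite assoc. apply le_pl_wx.
      * intro h. rewrite (R_inv t y1 (mkP _ (PP_pl (w t ⋅ pj y1)))).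
        rewrite (R_inv t y2 (mkP _ (PP_pl (w t ⋅ pj y2)))). simpl.
        unfold le in h. rewrite <- h. rewrite <- assoc. apply le_st_xw.
        apply R_iff; split; auto. apply R_iff; split; auto.
  - intro t. exists (mkP _ (PP_st (w t))). apply pdom_iff. apply le_refl, PP_st.
Qed.

Lemma projMul_val e f : pj (projMul S e f) = pj e ⋅ pj f.
Proof. unfold projMul. destruct excluded_middle_informative as [h|h]. reflexivity.
  exfalso. apply h, isProj_PP, PP_mul; apply pj_PP. Qed.
Lemma projOne_val : pj (projOne S) = one.
Proof. unfold projOne. destruct excluded_middle_informative as [h|h]. reflexivity.
  exfalso. apply h, isProj_PP, PP_one. Qed.

Lemma rev_spec t x : pran R t x -> R t (Mrev R t x) x.
Proof. intro h. unfold Mrev. apply epsilon_spec. exact h. Qed.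
Lemma act_spec t y : pdom R t y -> R t y (Mact R t y).
Proof. intro h. unfold Mact. apply epsilon_spec. exact h. Qed.
Lemma rev_val t x : pran R t x -> pj (Mrev R t x) = st (pj x ⋅ w t).
Proof. intro h. apply R_inv, rev_spec, h. Qed.
Lemma act_val t y : pdom R t y -> pj (Mact R t y) = pl (w t ⋅ pj y).
Proof. intro h. apply act_spec in h. apply R_iff in h. apply h. Qed.

Lemma inM_iff (p : Proj S * list A) : inM R p <-> le (pj (fst p)) (pl (w (snd p))).
Proof. apply pran_iff. Qed.

Lemma raw_mul_fst p q : inM R p -> inM R q ->
  pj (fst (Mraw_mul (@app A) (projMul S) R p q)) = pl (pj (fst p) ⋅ w (snd p) ⋅ pj (fst q)).
Proof. destruct p as [x s], q as [y t]. unfold inM; simpl. intros hp hq.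
  unfold Mraw_mul; simpl. rewrite act_val.
  - rewrite projMul_val, rev_val by auto. rewrite assoc, <- mov_l by apply pj_PP. reflexivity.
  - apply pdom_iff. rewrite projMul_val, rev_val by auto. eapply le_trans.
    apply le_mul_l. apply PP_st. apply pj_PP. apply le_st_xw.
Qed.

Lemma raw_mul_in p q : inM R p -> inM R q -> inM R (Mraw_mul (@app A) (projMul S) R p q).
Proof. intros hp hq. apply inM_iff. rewrite raw_mul_fst by auto.
  destruct p as [x s], q as [y t]. apply inM_iff in hp, hq. simpl in *. rewrite wval_app.
  set (X := pj x) in *. set (Y := pj y) in *.
  assert (hX : PP X) by apply pj_PP. assert (hY : PP Y) by apply pj_PP.
  assert (E : pl (X ⋅ w s ⋅ Y) = X ⋅ pl (w s ⋅ w t ⋅ st (Y ⋅ w t))).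
  { transitivity (pl (X ⋅ w s ⋅ Y ⋅ pl (w t))).
    { rewrite <- (assoc _ Y). unfold le in hq. rewrite hq. reflexivity. }
    rewrite <- plus_xy. rewrite <- !assoc. rewrite (mov_l Y (w t)) at 1 by auto.
    rewrite plus_ew by auto. rewrite !assoc. reflexivity. }
  rewrite E. eapply le_trans. apply le_mul_r, PP_pl. apply le_pl_wx.
Qed.

Lemma raw_star_in p : inM R p -> inM R (Mraw_star (@nil A) R p).
Proof. intro h. apply inM_iff. simpl. rewrite pl_one. unfold le. apply oner. Qed.
Lemma raw_plus_in p : inM R p -> inM R (Mraw_plus (@nil A) p).
Proof. intro h. apply inM_iff. simpl. rewrite pl_one. unfold le. apply oner. Qed.
Lemma raw_one_in : inM R (Mraw_one (@nil A) (projOne S)).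
Proof. apply inM_iff. simpl. rewrite projOne_val, pl_one. unfold le. apply oner. Qed.

Lemma closed : M_closed (@app A) (@nil A) (projMul S) (projOne S) R.
Proof. split. apply raw_one_in. split. apply raw_mul_in. intros p h; split.
  apply raw_star_in, h. apply raw_plus_in, h. Qed.

Local Notation Mc := (Mcar R).
Local Notation MM := (Mmul (@app A) (projMul S) R).
Local Notation MS := (Mstar (@nil A) R).
Local Notation MP := (Mplus (@nil A) R).

Definition px (p : Mc) : S := pj (fst (proj1_sig p)).
Definition ps (p : Mc) : list A := snd (proj1_sig p).
Definition phi (p : Mc) : S := px p ⋅ w (ps p).

Lemma px_PP p : PP (px p). Proof. apply pj_PP. Qed.
Lemma px_le p : le (px p) (pl (w (ps p))).
Proof. apply inM_iff. apply (proj2_sig p). Qed.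

Lemma Meq (p q : Mc) : px p = px q -> ps p = ps q -> p = q.
Proof. destruct p as [[e s] hp], q as [[f t] hq]. unfold px, ps; simpl. intros h1 h2.
  apply projeq in h1. subst. f_equal. apply proof_irrelevance. Qed.

Lemma MM_sig p q : proj1_sig (MM p q) = Mraw_mul (@app A) (projMul S) R (proj1_sig p) (proj1_sig q).
Proof. unfold Mmul. destruct excluded_middle_informative as [h|h]. reflexivity.
  exfalso. apply h, raw_mul_in. apply (proj2_sig p). apply (proj2_sig q). Qed.
Lemma MS_sig p : proj1_sig (MS p) = Mraw_star (@nil A) R (proj1_sig p).
Proof. unfold Mstar. destruct excluded_middle_informative as [h|h]. reflexivity.
  exfalso. apply h, raw_star_in. apply (proj2_sig p). Qed.
Lemma MP_sig p : proj1_sig (MP p) = Mraw_plus (@nil A) (proj1_sig p).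
Proof. unfold Mplus. destruct excluded_middle_informative as [h|h]. reflexivity.
  exfalso. apply h, raw_plus_in. apply (proj2_sig p). Qed.

Lemma px_mul p q : px (MM p q) = pl (px p ⋅ w (ps p) ⋅ px q).
Proof. unfold px, ps. rewrite MM_sig, raw_mul_fst. reflexivity.
  apply (proj2_sig p). apply (proj2_sig q). Qed.
Lemma ps_mul p q : ps (MM p q) = ps p ++ ps q.
Proof. unfold ps. rewrite MM_sig. reflexivity. Qed.
Lemma px_star p : px (MS p) = st (px p ⋅ w (ps p)).
Proof. unfold px, ps. rewrite MS_sig. simpl. apply rev_val. apply (proj2_sig p). Qed.
Lemma ps_star p : ps (MS p) = nil.
Proof. unfold ps. rewrite MS_sig. reflexivity. Qed.
Lemma px_plus p : px (MP p) = px p.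
Proof. unfold px. rewrite MP_sig. reflexivity. Qed.
Lemma ps_plus p : ps (MP p) = nil.
Proof. unfold ps. rewrite MP_sig. reflexivity. Qed.

Lemma px_phi p : px p = pl (phi p).
Proof. unfold phi. rewrite plus_ew by apply px_PP. symmetry. apply px_le. Qed.
Lemma Meq_phi p q : phi p = phi q -> ps p = ps q -> p = q.
Proof. intros h1 h2. apply Meq; auto. rewrite !px_phi, h1. reflexivity. Qed.

Lemma phi_mul p q : phi (MM p q) = phi p ⋅ phi q.
Proof. unfold phi. rewrite px_mul, ps_mul, wval_app.
  set (x := px p). set (y := px q). set (s := w (ps p)). set (t := w (ps q)).
  assert (hx : PP x) by apply px_PP. assert (hy : PP y) by apply px_PP.
  rewrite <- (assoc x s y), (mov_r y s) by auto.
  rewrite plus_xy, (rm_7 _ HS), (rm_6 _ HS (s ⋅ y) s), plus_le.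
  rewrite PP_plus by (apply PP_mul; auto using PP_pl).
  set (P := pl (s ⋅ y)). rewrite !assoc. rewrite <- (assoc x s y), (mov_r y s) by auto.
  unfold P. rewrite !assoc. reflexivity.
Qed.
Lemma phi_star p : phi (MS p) = st (phi p).
Proof. unfold phi at 1. rewrite px_star, ps_star, wval_nil, oner. reflexivity. Qed.
Lemma phi_plus p : phi (MP p) = pl (phi p).
Proof. unfold phi at 1. rewrite px_plus, ps_plus, wval_nil, oner. apply px_phi. Qed.

Variable H1 : inM R (Mraw_one (@nil A) (projOne S)).
Local Notation MA := (Malg (@app A) (@nil A) (projMul S) (projOne S) R H1).
Definition oneM : Mc := exist _ _ H1.
Lemma phi_one : phi oneM = one.
Proof. unfold phi, px, ps, oneM. simpl. rewrite projOne_val. apply oner. Qed.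
Lemma ps_one : ps oneM = nil. Proof. reflexivity. Qed.

Ltac Msimp := repeat first [ rewrite phi_mul | rewrite phi_star | rewrite phi_plus
  | rewrite ps_mul | rewrite ps_star | rewrite ps_plus | rewrite phi_one | rewrite ps_one ].

Lemma M_rm : is_restriction_monoid MA.
Proof.
  constructor; simpl; intros; apply Meq_phi; fold oneM; Msimp.
  all: first [ apply (rm_assoc _ HS) | apply (rm_onel _ HS) | apply (rm_oner _ HS)
    | apply (rm_1 _ HS) | apply (rm_2 _ HS) | apply (rm_3 _ HS) | apply (rm_4 _ HS)
    | apply (rm_5 _ HS) | apply (rm_6 _ HS) | apply (rm_7 _ HS) | apply (rm_8 _ HS)
    | apply (rm_9 _ HS) | apply (rm_10 _ HS)
    | (simpl; rewrite ?app_nil_r, ?app_assoc; reflexivity) ].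
Qed.

Lemma phi_proj p : ps p = nil -> phi p = px p.
Proof. intro h. unfold phi. rewrite h, wval_nil. apply oner. Qed.

Lemma isProjM e : isProj MA e -> ps e = nil /\ PP (px e).
Proof. intros [y ->]. change (ps (MS y) = nil /\ PP (px (MS y))). rewrite ps_star, px_star.
  split; auto using PP_st. Qed.
Lemma PM_of e : PP (px e) -> ps e = nil -> isProj MA e.
Proof. intros h1 h2. exists e. change (e = MS e). apply Meq_phi.
  rewrite phi_star, phi_proj by auto. auto. rewrite ps_star; auto. Qed.
Lemma PM_plus p : isProj MA (MP p).
Proof. apply PM_of. rewrite px_plus. apply px_PP. apply ps_plus. Qed.

Definition mmax (s : list A) : Mc.
Proof. refine (exist _ (mkP (pl (w s)) (PP_pl _), s) _). apply inM_iff. apply le_refl, PP_pl. Defined.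
Lemma px_mmax s : px (mmax s) = pl (w s). Proof. reflexivity. Qed.
Lemma ps_mmax s : ps (mmax s) = s. Proof. reflexivity. Qed.
Lemma phi_mmax s : phi (mmax s) = w s. Proof. unfold phi. simpl. apply (rm_5 _ HS). Qed.

Lemma decomp p : p = MM (MP p) (mmax (ps p)).
Proof. apply Meq_phi. rewrite phi_mul, phi_plus, phi_mmax, <- px_phi. reflexivity.
  rewrite ps_mul, ps_plus. reflexivity. Qed.

Lemma sigma_iff a b : sigma MA a b <-> ps a = ps b.
Proof. split.
  - intro h. apply (h (fun a b => ps a = ps b)).
    + split; [|split; [|split; [|split]]].
      * reflexivity.
      * intros; symmetry; auto.
      * intros; etransitivity; eauto.
      * intros x y z e. change (ps (MM z x) = ps (MM z y) /\ ps (MM x z) = ps (MM y z)).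
        rewrite !ps_mul, e. split; reflexivity.
      * intros x y e. change (ps (MS x) = ps (MS y) /\ ps (MP x) = ps (MP y)).
        rewrite !ps_star, !ps_plus. split; reflexivity.
    + intros e f he hf. apply isProjM in he, hf. rewrite (proj1 he), (proj1 hf). reflexivity.
  - intros h th Hth HP. destruct Hth as (Hr & Hs & Ht & Hm & Hu).
    pose proof (proj2 (Hm _ _ (mmax (ps a)) (HP _ _ (PM_plus a) (PM_plus b)))) as X.
    rewrite (decomp a), (decomp b). rewrite <- h. exact X.
Qed.

Lemma M_proper : proper MA.
Proof. intros a b h. apply (proj1 (sigma_iff _ _)) in h. split.
  - intro e. change (MS a = MS b) in e. apply (f_equal phi) in e. rewrite !phi_star in e.
    apply Meq; auto.
    rewrite <- (inv2 (px a) (w (ps a))) by (apply px_PP || apply px_le).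
    rewrite <- (inv2 (px b) (w (ps b))) by (apply px_PP || apply px_le).
    fold (phi a). fold (phi b). rewrite e, h. reflexivity.
  - intro e. change (MP a = MP b) in e. apply (f_equal px) in e. rewrite !px_plus in e.
    apply Meq; auto.
Qed.

Lemma M_F : F_restriction MA.
Proof. intro a. exists (mmax (ps a)). split. apply sigma_iff. reflexivity.
  intros b hb. apply (proj1 (sigma_iff _ _)) in hb. exists (MP b). split. apply PM_plus.
  change (b = MM (MP b) (mmax (ps a))). rewrite hb. apply decomp. Qed.

Lemma rep_spec (C : SigmaClass MA) : proj1_sig C = sigma MA (rep MA C).
Proof. unfold rep. destruct (constructive_indefinite_description _ _) as [r hr]. exact hr. Qed.
Definition cs (C : SigmaClass MA) := ps (rep MA C).
Lemma inC C a : proj1_sig C a <-> ps a = cs C.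
Proof. rewrite rep_spec, sigma_iff. unfold cs. split; intro; symmetry; auto. Qed.
Lemma cs_classOf a : cs (classOf MA a) = ps a.
Proof. pose proof (rep_spec (classOf MA a)) as E. simpl in E.
  assert (X : sigma MA a a) by (apply sigma_iff; reflexivity).
  rewrite E in X. apply (proj1 (sigma_iff _ _)) in X. unfold cs. auto. Qed.
Lemma cs_mul C D : cs (classMul MA C D) = cs C ++ cs D.
Proof. unfold classMul. rewrite cs_classOf. apply ps_mul. Qed.
Lemma cs_one : cs (classOne MA) = nil.
Proof. unfold classOne. rewrite cs_classOf. reflexivity. Qed.

Definition pjM (e : Proj MA) : Mc := proj1_sig e.
Lemma pjM_ps e : ps (pjM e) = nil. Proof. apply isProjM, (proj2_sig e). Qed.
Lemma pjM_PP e : PP (px (pjM e)). Proof. apply isProjM, (proj2_sig e). Qed.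
Lemma ProjM_eq (e f : Proj MA) : px (pjM e) = px (pjM f) -> e = f.
Proof. intro h. assert (E : pjM e = pjM f). { apply Meq; auto. rewrite !pjM_ps; auto. }
  destruct e as [e he], f as [f hf]. unfold pjM in E; simpl in E. subst. f_equal.
  apply proof_irrelevance. Qed.
Definition mkPMc (x : S) (h : PP x) : Mc.
Proof. refine (exist _ (mkP x h, nil) _). apply inM_iff. simpl. rewrite pl_one. unfold le. apply oner.
Defined.
Definition mkPM (x : S) (h : PP x) : Proj MA.
Proof. refine (exist _ (mkPMc x h) _). apply PM_of. apply h. reflexivity. Defined.
Lemma px_mkPM x h : px (pjM (mkPM x h)) = x. Proof. reflexivity. Qed.

Lemma UA_iff C e f : underlying_action MA C e f <-> WR (cs C) (px (pjM e)) (px (pjM f)).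
Proof. split.
  - intros [a [ha [hn hf]]]. apply inC in ha. destruct hn as [gg [hg he]].
    change (pjM e = MM gg (MS a)) in he. change (pjM f = MP (MM a (pjM e))) in hf.
    assert (E1 : px (pjM e) = px gg ⋅ st (px a ⋅ w (ps a))).
    { rewrite <- phi_proj by apply pjM_ps. rewrite he, phi_mul, phi_star.
      apply isProjM in hg. rewrite phi_proj by apply hg. reflexivity. }
    assert (L : le (px (pjM e)) (st (px a ⋅ w (ps a)))).
    { rewrite E1. apply le_mul_r, PP_st. }
    rewrite <- ha. split.
    + eapply le_trans. exact L. apply le_st_xw.
    + rewrite hf, px_plus, px_mul. rewrite (mov_l (px a)) by apply px_PP.
      rewrite <- assoc. f_equal. f_equal. f_equal. unfold le in L.
      rewrite PP_comm; auto using PP_st, pjM_PP.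
  - intros [h1 h2]. exists (mmax (cs C)). split. apply inC; reflexivity. split.
    + exists (pjM e). split. apply (proj2_sig e).
      change (pjM e = MM (pjM e) (MS (mmax (cs C)))). apply Meq_phi.
      rewrite phi_mul, phi_star, phi_mmax, phi_proj by apply pjM_ps. symmetry; exact h1.
      rewrite ps_mul, ps_star, pjM_ps. reflexivity.
    + change (pjM f = MP (MM (mmax (cs C)) (pjM e))). apply Meq.
      rewrite px_plus, px_mul, px_mmax, ps_mmax, (rm_5 _ HS). exact h2.
      rewrite ps_plus, pjM_ps. reflexivity.
Qed.

Lemma M_ultra : ultra_F_restriction MA.
Proof. split. apply M_proper. split. apply M_F. split; [split|].
  - intros C e f1 f2 h1 h2. apply UA_iff in h1, h2. apply ProjM_eq.
    destruct h1 as [_ ->], h2 as [_ ->]. reflexivity.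
  - intro y. apply UA_iff. rewrite cs_one. apply WR_unit, pjM_PP.
  - intros s t y z x h1 h2. apply UA_iff in h1, h2. apply UA_iff. rewrite cs_mul.
    eapply WR_comp; eauto using pjM_PP.
  - intros s t y. split.
    + intros [f hf]. apply UA_iff in hf. rewrite cs_mul in hf. destruct hf as [hf _].
      rewrite wval_app in hf.
      destruct (WR_dom (cs s) (cs t) _ (pjM_PP y) hf) as [k1 k2].
      exists (mkPM _ (PP_pl (w (cs t) ⋅ px (pjM y)))). split.
      * apply UA_iff. rewrite px_mkPM. exact k1.
      * exists (mkPM _ (PP_pl (w (cs s) ⋅ pl (w (cs t) ⋅ px (pjM y))))). apply UA_iff.
        rewrite !px_mkPM. split; auto.
    + intros [z [h1 [f h2]]]. exists f. apply UA_iff in h1, h2. apply UA_iff. rewrite cs_mul.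
      eapply WR_comp; eauto using pjM_PP.
Qed.

Lemma st_swap W a : PP a -> st W ⋅ a = st (pl (W ⋅ a) ⋅ W).
Proof. intro h. rewrite <- mov_r by auto. rewrite star_we by auto. reflexivity. Qed.

Lemma M_ample : ample MA.
Proof. split.
  - intros a b c e. change (MM a c = MM b c) in e. change (MM a (MP c) = MM b (MP c)).
    assert (E1 := f_equal ps e). rewrite !ps_mul in E1. apply app_inv_tail in E1.
    assert (E2 := f_equal px e). rewrite !px_mul in E2.
    apply Meq. rewrite !px_mul, !px_plus. exact E2. rewrite !ps_mul, E1. reflexivity.
  - intros a b c e. change (MM c a = MM c b) in e. change (MM (MS c) a = MM (MS c) b).
    assert (E1 := f_equal ps e). rewrite !ps_mul in E1. apply app_inv_head in E1.
    assert (E2 := f_equal px e). rewrite !px_mul in E2.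
    apply Meq. rewrite !px_mul, !px_star, !ps_star, wval_nil, !oner.
    rewrite (st_swap _ (px a)), (st_swap _ (px b)) by apply px_PP. rewrite E2. reflexivity.
    rewrite !ps_mul, E1. reflexivity.
Qed.

Lemma gen_form z : generated S g z -> exists e s, PP e /\ z = e ⋅ w s.
Proof. induction 1 as [a| |x y _ [e [s [he ->]]] _ [f [t [hf ->]]]|x _ [e [s [he ->]]]|x _ [e [s [he ->]]]].
  - exists one, (a :: nil). split. apply PP_one. simpl. rewrite onel, oner. reflexivity.
  - exists one, nil. split. apply PP_one. simpl. rewrite onel. reflexivity.
  - exists (e ⋅ pl (w s ⋅ f)), (s ++ t). split. apply PP_mul; auto using PP_pl.
    rewrite wval_app. set (P := pl (w s ⋅ f)).
    rewrite <- (assoc e (w s) _), (assoc (w s) f), (mov_r f (w s)) by auto.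
    unfold P. rewrite !assoc. reflexivity.
  - exists (st (e ⋅ w s)), nil. split. apply PP_st. simpl. rewrite oner. reflexivity.
  - exists (pl (e ⋅ w s)), nil. split. apply PP_pl. simpl. rewrite oner. reflexivity.
Qed.

Lemma phi_surj : (forall x : S, generated S g x) -> forall z, exists p : Mc, phi p = z.
Proof. intros Hg z. destruct (gen_form z (Hg z)) as [e [s [he ->]]].
  assert (h : PP (e ⋅ pl (w s))) by (apply PP_mul; auto using PP_pl).
  assert (hin : inM R (mkP _ h, s)).
  { apply inM_iff. simpl. apply le_mul_r, PP_pl. }
  exists (exist _ _ hin). unfold phi, px, ps. simpl. rewrite <- assoc, (rm_5 _ HS). reflexivity.
Qed.
End Alg.

Theorem lemma3p10 (S : ralg) (A : Type) (g : A -> S) :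
  is_restriction_monoid S ->
  (forall x : S, generated S g x) ->
  (* (1) the action of T = A^* on E = P(S) *)
  (is_partially_defined_action (@app A) (@nil A) (word_action S g) /\
   axiomA (leP S) (word_action S g) /\
   axiomB (leP S) (word_action S g) /\
   axiomC (word_action S g)) /\
  (* M(T,E) is a monoid (closed under its operations) ... *)
  M_closed (@app A) (@nil A) (projMul S) (projOne S) (word_action S g) /\
  exists H1 : inM (word_action S g) (projOne S, @nil A),
    let M := Malg (@app A) (@nil A) (projMul S) (projOne S) (word_action S g) H1 in
    (* ... which is an ultra F-restriction, ample restriction monoid *)
    is_restriction_monoid M /\ ultra_F_restriction M /\ ample M /\
    (* (2) (e,v) |-> e * value(v) *)
    let phi := fun p : M => rmul (proj1_sig (fst (proj1_sig p))) (wval S g (snd (proj1_sig p))) in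
    surjective phi /\ projection_separating M S phi /\ is_hom M S phi.
Proof.
  intros HS Hg. split. exact (part1 S HS A g). split. exact (closed S HS A g).
  exists (raw_one_in S HS A g). intro M.
  split. exact (M_rm S HS A g _). split. exact (M_ultra S HS A g _).
  split. exact (M_ample S HS A g _). intro phi0.
  split; [|split].
  - intro z. destruct (phi_surj S HS A g Hg z) as [p hp]. exists p. exact hp.
  - intros x y hx hy h. apply (Meq_phi S HS A g). exact h.
    rewrite (proj1 (isProjM S HS A g _ x hx)), (proj1 (isProjM S HS A g _ y hy)). reflexivity.
  - split; [|split; [|split]].
    + intros x y. exact (phi_mul S HS A g x y).
    + intros x. exact (phi_star S HS A g x).
    + intros x. exact (phi_plus S HS A g x).
    + exact (phi_one S HS A g _).
Qed.
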